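(* Let $(X_r)_{r\ge 0}$ be a discrete time Markov chain on a finite state space $S$ with transition probability matrix $\mathbf{P}$, let $M\subset S$ with $M\neq\emptyset$ and $\overline{M}=S\setminus M\neq\emptyset$, and assume that $\mathbf{I}-\mathbf{P}_M$ and $\mathbf{I}-\mathbf{P}_{\overline{M}}$ are invertible. Then for every integer $m\ge 0$: (a) $\displaystyle M_m(\mathcal{N}_1)=\sum_{j=0}^{m} b_{m,j,1}\,\mathbf{P}_M^{j}\,(\mathbf{I}-\mathbf{P}_M)^{-j-1}\,\mathbf{P}_{M\overline{M}}$; (b) $\displaystyle M_m(\mathcal{R}_1)=\mathbf{P}_M+\mathbf{P}_{M\overline{M}}\sum_{j=0}^{m} b_{m,j,2}\,\mathbf{P}_{\overline{M}}^{j}\,(\mathbf{I}-\mathbf{P}_{\overline{M}})^{-j-1}\,\mathbf{P}_{\overline{M}M}$.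
   Context: Moment generating Stirling numbers: for integers $i\ge0$, $j\ge0$ and real $k$, $b_{i,j,k}=\sum_{r=0}^{j}\binom{j}{r}(-1)^{j-r}(r+k)^i$, with the convention $0^0=1$. Block notation: $\mathbf{P}_M=(p_{ij})_{i,j\in M}$, $\mathbf{P}_{M\overline{M}}=(p_{ij})_{i\in M,j\in\overline{M}}$, $\mathbf{P}_{\overline{M}M}=(p_{ij})_{i\in\overline{M},j\in M}$, $\mathbf{P}_{\overline{M}}=(p_{ij})_{i,j\in\overline{M}}$. Passage and recurrence times (matrix valued): for $i\in M$, let $\tau^{N}=\min\{r\ge1: \#\{1\le t\le r: X_t\in\overline{M}\}=1\}$ and $\tau^{R}=\min\{r\ge1:\#\{1\le t\le r: X_t\in M\}=1\}$. For $n\ge0$, $P(\mathcal{N}_1=n)$ is the $|M|\times|\overline{M}|$ matrix with $(i,j)$ entry $P(\tau^N=n,\,X_n=j\mid X_0=i)$ ($i\in M$, $j\in\overline{M}$), and $P(\mathcal{R}_1=n)$ is the $|M|\times|M|$ matrix with $(i,j)$ entry $P(\tau^R=n,\,X_n=j\mid X_0=i)$ ($i,j\in M$). Moments: for a matrix random variable $\mathcal{Y}$ of this kind, $M_m(\mathcal{Y})=\sum_{n=0}^{\infty} n^m P(\mathcal{Y}=n)$ (entrywise), with $0^0=1$. *)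

(* Defs.v *)
From HB Require Import structures.
From mathcomp Require Import all_boot all_order all_algebra.
From mathcomp Require Import all_classical all_reals all_analysis.
Set Implicit Arguments. Unset Strict Implicit. Unset Printing Implicit Defensive.
Import Order.TTheory GRing.Theory Num.Theory.
Import numFieldNormedType.Exports.
Local Open Scope classical_set_scope.
Local Open Scope ring_scope.

Section Defs.
Variables (R : realType) (S : finType).

Definition stochastic (P : S -> S -> R) : Prop :=
  (forall x y, 0 <= P x y) /\ (forall x, \sum_(y : S) P x y = 1).

Definition bst (i j : nat) (k : R) : R :=
  \sum_(r < j.+1) ('C(j, r))%:R * (-1) ^+ (j - r) * (r%:R + k) ^+ i.

(* trajectory X_0 = x0, X_t = s_(t-1) for 1 <= t <= n *)
Definition traj (n : nat) (x0 : S) (s : n.-tuple S) (t : nat) : S :=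
  if t is t'.+1 then nth x0 s t' else x0.

Definition pathw (P : S -> S -> R) (n : nat) (x0 : S) (s : n.-tuple S) : R :=
  \prod_(t < n) P (traj x0 s t) (traj x0 s t.+1).

Definition cnt (A : {set S}) (x : nat -> S) (r : nat) : nat :=
  \sum_(1 <= t < r.+1) (x t \in A : nat).

(* tau = min{r >= 1 : #{1<=t<=r : X_t \in A} = 1} equals n *)
Definition tau_is (A : {set S}) (x : nat -> S) (n : nat) : bool :=
  [&& (1 <= n)%N, cnt A x n == 1%N & [forall r : 'I_n, cnt A x r != 1%N]].

(* P(tau = n, X_n = j | X_0 = i), tau being the first time the count of
   visits to A reaches 1 *)
Definition probTau (P : S -> S -> R) (A : {set S}) (i j : S) (n : nat) : R :=
  \sum_(s : n.-tuple S | tau_is A (traj i s) n && (traj i s n == j)) pathw P i s.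

Definition ev (A : {set S}) (k : 'I_#|A|) : S := enum_val k.

Definition blk (P : S -> S -> R) (A B : {set S}) : 'M[R]_(#|A|, #|B|) :=
  \matrix_(i, j) P (ev i) (ev j).

Definition probN1 (P : S -> S -> R) (M : {set S}) (n : nat) : 'M[R]_(#|M|, #|~: M|) :=
  \matrix_(i, j) probTau P (~: M) (ev i) (ev j) n.
Definition probR1 (P : S -> S -> R) (M : {set S}) (n : nat) : 'M[R]_(#|M|, #|M|) :=
  \matrix_(i, j) probTau P M (ev i) (ev j) n.

Definition moment_is {p q : nat} (Y : nat -> 'M[R]_(p, q)) (m : nat)
    (L : 'M[R]_(p, q)) : Prop :=
  forall i j, (fun N : nat => \sum_(n < N) (n%:R ^+ m * Y n i j)) @ \oo --> L i j.

End Defs.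

(* Main.v *)
Require Import Defs.
From HB Require Import structures.
From mathcomp Require Import all_boot all_order all_algebra.
From mathcomp Require Import all_classical all_reals all_analysis.
From mathcomp Require Import ring lra.
Import Order.TTheory GRing.Theory Num.Theory.
Import numFieldNormedType.Exports.
Local Open Scope classical_set_scope.
Local Open Scope ring_scope.


Section Geo.
Variables (R : realType) (n : nat) (Q : 'M[R]_n).
Hypothesis Q0 : forall i j, 0 <= Q i j.
Hypothesis Q1 : forall i, \sum_j Q i j <= 1.
Hypothesis QU : (1%:M - Q) \in unitmx.

Definition uu k i := \sum_j (Q ^+ k) i j.

Lemma Qk0 k i j : 0 <= (Q ^+ k) i j.
Proof.
elim: k i j => [|k IH] i j; first by rewrite expr0 mxE; case: (i == j).
rewrite exprS -mulmxE mxE; apply: sumr_ge0 => l _; exact: mulr_ge0.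
Qed.

Lemma uu_ge0 k i : 0 <= uu k i.
Proof. by apply: sumr_ge0 => j _; exact: Qk0. Qed.

Lemma uu_add a b i : uu (a + b) i = \sum_l (Q ^+ a) i l * uu b l.
Proof.
rewrite /uu exprD -mulmxE; under eq_bigr do rewrite mxE.
rewrite exchange_big; apply: eq_bigr => l _; by rewrite mulr_sumr.
Qed.

Lemma uu0 i : uu 0 i = 1.
Proof.
rewrite /uu expr0 (bigD1 i) //= mxE eqxx big1 ?addr0 // => j /negbTE.
by rewrite mxE eq_sym => ->.
Qed.

Lemma uu1 i : uu 1 i = \sum_j Q i j.
Proof. by rewrite /uu expr1. Qed.

Lemma uu_le1 k i : uu k i <= 1.
Proof.
elim: k i => [|k IH] i; first by rewrite uu0.
rewrite -add1n uu_add expr1; apply: le_trans (Q1 i).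
apply: ler_sum => l _; rewrite -[leRHS]mulr1; apply: ler_wpM2l => //.
Qed.

Lemma uu_bound a b i c : (forall l, uu b l <= c) -> uu (a + b) i <= uu a i * c.
Proof.
move=> H; rewrite uu_add [uu a i]/uu mulr_suml; apply: ler_sum => l _.
by apply: ler_wpM2l; [exact: Qk0|exact: H].
Qed.

Lemma uu_mono k k' i : (k <= k')%N -> uu k' i <= uu k i.
Proof.
move=> kk; rewrite -(subnKC kk).
have := @uu_bound k (k' - k)%N i 1 (fun l => uu_le1 _ l).
by rewrite mulr1.
Qed.

Definition inC j := forall k, uu k j = 1.

Lemma closedC a b : inC a -> ~ inC b -> Q a b = 0.
Proof.
move=> Ha /existsNP [k Hk].
have ltk : uu k b < 1 by rewrite lt_neqAle uu_le1 andbT; apply/eqP.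
apply/eqP; rewrite eq_le Q0 andbT; rewrite leNgt; apply/negP => Qp.
have := Ha (1 + k)%N; rewrite uu_add expr1 => E.
have : \sum_l Q a l * uu k l < 1.
  apply: lt_le_trans (Q1 a).
  rewrite (bigD1 b) //= [X in _ < X](bigD1 b) //=.
  apply: ltr_leD; first by rewrite gtr_pMr.
  apply: ler_sum => l _; rewrite -[leRHS]mulr1; apply: ler_wpM2l => //.
  exact: uu_le1.
by rewrite E ltxx.
Qed.

Definition ee j : R := if `[< inC j >] then 1 else 0.

Lemma rowsumC a : inC a -> \sum_j Q a j * ee j = 1.
Proof.
move=> Ha; rewrite -(Ha 1%N) uu1; apply: eq_bigr => j _.
rewrite /ee; case: asboolP => [_|Hj]; first by rewrite mulr1.
by rewrite (@closedC _ _ Ha Hj) mul0r.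
Qed.

Lemma ex_lt1 i : exists k, uu k i < 1.
Proof.
apply: contrapT => Hn.
have Hi : inC i.
  move=> k; apply/eqP; rewrite eq_le uu_le1 /= leNgt; apply/negP => H.
  by apply: Hn; exists k.
pose D : 'M[R]_n := diag_mx (\row_j ee j).
pose A : 'M[R]_n := 1%:M - Q.
have DA : D *m A = D *m A *m D.
  apply/matrixP => a b; rewrite mul_mx_diag !mul_diag_mx !mxE.
  rewrite /ee; case: (asboolP (inC a)) => Ha; last by rewrite !mul0r.
  case: (asboolP (inC b)) => Hb; first by rewrite mulr1.
  have ab : a != b by apply/eqP => ab; apply: Hb; rewrite -ab.
  by rewrite (negbTE ab) (@closedC _ _ Ha Hb) subr0 !mul1r mul0r.
have sub1 : (D *m A <= D)%MS by rewrite DA submxMl.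
have rk : \rank (D *m A) = \rank D by rewrite mxrankMfree // row_free_unit.
have sub2 : (D <= D *m A)%MS.
  by have := mxrank_leqif_sup sub1; rewrite rk => /leqif_refl.
have : (row i D <= D *m A)%MS by apply: submx_trans sub2; exact: row_sub.
case/submxP => z Hz.
pose ev : 'cV[R]_n := \col_j ee j.
have E1 : (row i D *m ev) 0 0 = 1.
  rewrite mxE (bigD1 i) //= big1 ?addr0.
    by rewrite !mxE eqxx /ee; case: asboolP => // _; rewrite mulr1n mulr1.
  by move=> j /negbTE ji; rewrite !mxE eq_sym ji mulr0n mul0r.
have E0 : D *m A *m ev = 0.
  apply/matrixP => a b; rewrite -mulmxA mul_diag_mx !mxE.
  case: (asboolP (inC a)) => Ha; last by rewrite /ee; case: asboolP => // _; rewrite mul0r.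
  have -> : ee a = 1 by rewrite /ee; case: asboolP.
  rewrite mul1r.
  under eq_bigr do rewrite !mxE mulrBl.
  rewrite big_split /= (bigD1 a) //= big1.
    rewrite eqxx mul1r addr0 sumrN.
    have -> : \sum_i0 Q a i0 * ee i0 = 1 by apply: rowsumC.
    by rewrite /ee; case: asboolP => // _; rewrite subrr.
  by move=> j /negbTE ja; rewrite eq_sym ja mul0r.
move: E1; rewrite Hz -mulmxA E0 mulmx0 mxE => /eqP; by rewrite eq_sym oner_eq0.
Qed.

Lemma geo_pre (s : seq 'I_n) : exists K c, [/\ (0 < K)%N, 0 <= c, c < 1 &
   forall i, i \in s -> uu K i <= c].
Proof.
elim: s => [|x s [K [c [K0 c0 c1 H]]]]; first by exists 1%N, 0.
have [k Hk] := ex_lt1 x.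
exists (maxn K k), (Num.max c (uu k x)); split.
- by rewrite leq_max K0.
- by rewrite le_max c0.
- by rewrite gt_max c1 Hk.
move=> i; rewrite inE => /orP [/eqP ->|Hi].
  by apply: le_trans (@uu_mono k (maxn K k) x (leq_maxr _ _)) _; rewrite le_max lexx orbT.
apply: le_trans (@uu_mono K (maxn K k) i (leq_maxl _ _)) _; rewrite le_max (H _ Hi) //.
Qed.

Lemma geo : exists K c, [/\ (0 < K)%N, 0 <= c, c < 1 &
   forall N i j, 0 <= (Q ^+ N) i j <= c ^+ (N %/ K)].
Proof.
have [K [c [K0 c0 c1 H]]] := geo_pre (enum 'I_n).
exists K, c; split => // N i j; rewrite Qk0 /=.
have HqK : forall q l, uu (q * K) l <= c ^+ q.
  elim=> [|q IH] l; first by rewrite mul0n uu0 expr0.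
  rewrite mulSn; apply: le_trans (@uu_bound K (q * K)%N l _ IH) _.
  rewrite exprS; apply: ler_wpM2r; first exact: exprn_ge0.
  by apply: H; rewrite mem_enum.
apply: le_trans (HqK (N %/ K)%N i).
apply: le_trans (@uu_mono _ _ i (leq_trunc_div N K)).
rewrite /uu (bigD1 j) //= -[X in X <= _]addr0; apply: lerD => //.
by apply: sumr_ge0 => l _; exact: Qk0.
Qed.

End Geo.


Section Real.
Variable R : realType.

Lemma cvg_sum_seq (I : Type) (r : seq I) (f : I -> nat -> R) (a : I -> R) :
  (forall i, (fun N => f i N) @ \oo --> a i) ->
  (fun N => \sum_(i <- r) f i N) @ \oo --> \sum_(i <- r) a i.
Proof.
move=> H; elim: r => [|x r IH].
  rewrite big_nil; under eq_fun do rewrite big_nil; exact: cvg_cst.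
rewrite big_cons; under eq_fun do rewrite big_cons; exact: cvgD.
Qed.

Lemma pow_aux (d : nat) (y : R) : 1 <= y ->
  y * (y + 1) ^+ d <= y ^+ d * (y + (2 ^+ d.+1 - 1)).
Proof.
move=> y1; have y0 : 0 <= y by apply: le_trans y1.
elim: d => [|d IH]; first by rewrite !expr0 mulr1 mul1r expr1; lra.
have t0 : 0 <= y ^+ d by exact: exprn_ge0.
have h2 : 1 <= 2 ^+ d.+1 :> R by apply: exprn_ege1; lra.
have E : (2 ^+ d.+2 - 1 : R) = 2 * (2 ^+ d.+1 - 1) + 1 by rewrite [in LHS]exprS; ring.
rewrite E; set a := (2 ^+ d.+1 - 1 : R) in IH h2 *; set t := y ^+ d in IH t0 *.
rewrite exprS mulrCA.
apply: le_trans (_ : (y + 1) * (t * (y + a)) <= _).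
  by apply: ler_wpM2l => //; lra.
rewrite exprS -/t.
have a0 : 0 <= a by rewrite /a; lra.
have : a <= a * y by rewrite ler_peMr.
nra.
Qed.

Lemma geom_poly_bounded (d : nat) (c : R) : 0 <= c -> c < 1 ->
  exists B, forall q : nat, (q%:R + 1) ^+ d * c ^+ q <= B.
Proof.
move=> c0 c1.
pose a : R := 2 ^+ d.+1 - 1.
have a0 : 0 <= a by rewrite /a subr_ge0 exprn_ege1 //; lra.
pose L := Num.Def.archi_bound (a * c / (1 - c)).
have HL : a * c / (1 - c) < L%:R.
  apply: archi_boundP; apply: divr_ge0; [exact: mulr_ge0|lra].
pose x q : R := (q%:R + 1) ^+ d * c ^+ q.
have x0 q : 0 <= x q by apply: mulr_ge0; apply: exprn_ge0 => //; lra.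
have dec q : (L <= q)%N -> x q.+1 <= x q.
  move=> Lq; rewrite /x.
  have y1 : 1 <= q%:R + 1 :> R by rewrite lerDr.
  have := @pow_aux d _ y1; rewrite -/a => H.
  have Lq' : L%:R <= q%:R :> R by rewrite ler_nat.
  have hy : a * c <= (q%:R + 1) * (1 - c).
    have := HL; rewrite ltr_pdivrMr; last by lra.
    move=> h; apply: le_trans (ltW h) _; apply: ler_wpM2r; lra.
  have key : (q%:R + 1) * ((q%:R + 2) ^+ d * c) <= (q%:R + 1) * (q%:R + 1) ^+ d.
    have -> : (q%:R + 2 : R) = q%:R + 1 + 1 by rewrite -addrA; congr (_ + _).
    rewrite mulrA; apply: le_trans (_ : (q%:R + 1) ^+ d * (q%:R + 1 + a) * c <= _).
      by apply: ler_wpM2r.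
    rewrite -mulrA [X in _ <= X]mulrC; apply: ler_wpM2l.
      by apply: exprn_ge0; lra.
    nra.
  rewrite ler_pM2l in key; last by lra.
  rewrite -[(q.+1)%:R]natr1 -addrA (_ : 1 + 1 = 2 :> R) // exprS.
  rewrite mulrCA mulrA; apply: ler_wpM2r; [exact: exprn_ge0|].
  by rewrite mulrC.
exists (\sum_(q < L.+1) x q) => q.
have HxL : x q <= x (minn q L).
  case: (leqP q L) => qL; first by [].
  elim: q qL => // q IH; rewrite ltnS leq_eqVlt => /orP [/eqP <-|qL].
    exact: dec.
  by apply: le_trans (IH qL); apply: dec; apply: ltnW.
apply: le_trans HxL _.
have mL : (minn q L < L.+1)%N by rewrite ltnS geq_minr.
rewrite (bigD1 (Ordinal mL)) //= -[X in X <= _]addr0; apply: lerD => //.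
by apply: sumr_ge0.
Qed.

End Real.


Section Decay.
Variable R : realType.

Lemma decay (K : nat) (c C : R) (d : nat) (w : nat -> R) : (0 < K)%N -> 0 <= c -> c < 1 ->
  (forall N, `|w N| <= C * (N%:R + 1) ^+ d * c ^+ (N %/ K)) -> w @ \oo --> 0.
Proof.
move=> K0 c0 c1 Hw.
have C0 : 0 <= C.
  have := Hw 0%N; rewrite div0n expr0 mulr1 add0r expr1n mulr1 => h.
  by apply: le_trans h.
have [B HB] := @geom_poly_bounded R d.+1 c c0 c1.
pose D := C * (K%:R ^+ d.+1 * B).
have bnd N : `|w N| <= D * harmonic N.
  apply: le_trans (Hw N) _; rewrite /harmonic /=.
  have N1 : 0 < N%:R + 1 :> R by rewrite ltr_wpDl.
  rewrite -natr1 ler_pdivlMr // /D -!mulrA; apply: ler_wpM2l => //.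
  rewrite [c ^+ _ * _]mulrC mulrA -exprSr.
  set q := (N %/ K)%N.
  have hN : N%:R + 1 <= K%:R * (q%:R + 1) :> R.
    have := ltn_ceil N K0; rewrite -/q => h.
    by rewrite !natr1 -natrM ler_nat mulnC.
  apply: le_trans (_ : (K%:R * (q%:R + 1)) ^+ d.+1 * c ^+ q <= _).
    apply: ler_wpM2r; first exact: exprn_ge0.
    by apply: lerXn2r => //; rewrite nnegrE //; apply: ltW.
  rewrite exprMn -mulrA; apply: ler_wpM2l; [exact: exprn_ge0|exact: HB].
apply: (@squeeze_cvgr _ _ _ _ (fun N => - (D * harmonic N)) (fun N => D * harmonic N)).
- by near=> N; rewrite -ler_norml bnd.
- rewrite -oppr0 -(mulr0 D); apply: cvgN; apply: cvgMr; exact: cvg_harmonic.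
- rewrite -(mulr0 D); apply: cvgMr; exact: cvg_harmonic.
Unshelve. all: by end_near.
Qed.

End Decay.


Section MxCvg.
Variable R : realType.

Definition mxcvg {p q : nat} (F : nat -> 'M[R]_(p, q)) (L : 'M[R]_(p, q)) :=
  forall i j, (fun N => F N i j) @ \oo --> L i j.

Lemma mxcvg_cst p q (L : 'M[R]_(p, q)) : mxcvg (fun _ => L) L.
Proof. by move=> i j; exact: cvg_cst. Qed.

Lemma mxcvg_ext p q (F G : nat -> 'M[R]_(p, q)) L :
  (forall N, F N = G N) -> mxcvg F L -> mxcvg G L.
Proof. by move=> E H i j; under eq_fun do rewrite -E; exact: H. Qed.

Lemma mxcvgD p q (F G : nat -> 'M[R]_(p, q)) L1 L2 :
  mxcvg F L1 -> mxcvg G L2 -> mxcvg (fun N => F N + G N) (L1 + L2).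
Proof.
move=> H1 H2 i j; rewrite mxE; under eq_fun do rewrite mxE; exact: cvgD.
Qed.

Lemma mxcvgB p q (F G : nat -> 'M[R]_(p, q)) L1 L2 :
  mxcvg F L1 -> mxcvg G L2 -> mxcvg (fun N => F N - G N) (L1 - L2).
Proof.
move=> H1 H2 i j; rewrite !mxE; under eq_fun do rewrite !mxE; exact: cvgB.
Qed.

Lemma mxcvg_mull p q r (B : 'M[R]_(p, q)) (F : nat -> 'M[R]_(q, r)) L :
  mxcvg F L -> mxcvg (fun N => B *m F N) (B *m L).
Proof.
move=> H i j; rewrite mxE; under eq_fun do rewrite mxE.
apply: cvg_sum_seq => l; apply: cvgMr; exact: H.
Qed.

Lemma mxcvg_mulr p q r (B : 'M[R]_(q, r)) (F : nat -> 'M[R]_(p, q)) L :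
  mxcvg F L -> mxcvg (fun N => F N *m B) (L *m B).
Proof.
move=> H i j; rewrite mxE; under eq_fun do rewrite mxE.
apply: cvg_sum_seq => l; apply: cvgMl; exact: H.
Qed.

Lemma mxcvg_shift p q (F : nat -> 'M[R]_(p, q)) L :
  mxcvg (fun N => F N.+1) L -> mxcvg F L.
Proof. by move=> H i j; rewrite -cvg_shiftS; exact: H. Qed.

End MxCvg.
Arguments mxcvg {R p q} F L.
Arguments mxcvg_cst {R p q} L.
Arguments mxcvg_ext {R p q F G L}.
Arguments mxcvgD {R p q F G L1 L2}.
Arguments mxcvgB {R p q F G L1 L2}.
Arguments mxcvg_mull {R p q r} B {F L}.
Arguments mxcvg_mulr {R p q r} B {F L}.
Arguments mxcvg_shift {R p q F L}.

Section Lim.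
Variables (R : realType) (n : nat) (Q : 'M[R]_n).
Hypothesis Q0 : forall i j, 0 <= Q i j.
Hypothesis Q1 : forall i, \sum_j Q i j <= 1.
Hypothesis QU : (1%:M - Q) \in unitmx.

Definition dif (g : nat -> R) k := g k.+1 - g k.
Definition SS (g : nat -> R) N : 'M[R]_n := \sum_(0 <= k < N) g k *: Q ^+ k.
Definition AA := invmx (1%:M - Q).

Lemma AAl : AA *m (1%:M - Q) = 1%:M. Proof. exact: mulVmx. Qed.
Lemma AAr : (1%:M - Q) *m AA = 1%:M. Proof. exact: mulmxV. Qed.

Lemma AAQ : AA *m Q = Q *m AA.
Proof.
have := AAl; have := AAr; rewrite mulmxBl mulmxBr mul1mx mulmx1 => h1 h2.
by apply: oppr_inj; apply: (addrI AA); rewrite h1 h2.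
Qed.

Lemma SS_rec g N : SS g N.+1 =
  AA *m (g 0%N *: 1%:M + Q *m SS (dif g) N - g N *: Q ^+ N.+1).
Proof.
have H : (1%:M - Q) *m SS g N.+1 = g 0%N *: 1%:M + Q *m SS (dif g) N - g N *: Q ^+ N.+1.
  rewrite mulmxBl mul1mx /SS.
  have e1 : \sum_(0 <= k < N.+1) g k *: Q ^+ k =
      g 0%N *: 1%:M + \sum_(0 <= k < N) g k.+1 *: Q ^+ k.+1.
    by rewrite big_nat_recl // expr0.
  have e2 : Q *m \sum_(0 <= k < N.+1) g k *: Q ^+ k =
      \sum_(0 <= k < N) g k *: Q ^+ k.+1 + g N *: Q ^+ N.+1.
    rewrite mulmx_sumr big_nat_recr //=; congr (_ + _); last first.
      by rewrite -scalemxAr mulmxE -exprS.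
    by apply: eq_bigr => k _; rewrite -scalemxAr mulmxE -exprS.
  have e3 : Q *m \sum_(0 <= k < N) dif g k *: Q ^+ k =
      \sum_(0 <= k < N) g k.+1 *: Q ^+ k.+1 - \sum_(0 <= k < N) g k *: Q ^+ k.+1.
    rewrite mulmx_sumr -sumrB; apply: eq_bigr => k _.
    by rewrite -scalemxAr mulmxE -exprS /dif scalerBl.
  rewrite e2 e3 e1.
  by rewrite opprD !addrA.
by rewrite -H mulmxA AAl mul1mx.
Qed.

Lemma poly_bound d : forall g, (forall k, iter d dif g k = 0) ->
  exists C, 0 <= C /\ forall N, `|g N| <= C * (N%:R + 1) ^+ d.
Proof.
elim: d => [|d IH] g Hg.
  by exists 0; split => // N; rewrite mul0r; have := Hg N => /= ->; rewrite normr0.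
have [C [C0 HC]] : exists C, 0 <= C /\ forall N, `|dif g N| <= C * (N%:R + 1) ^+ d.
  by apply: IH => k; rewrite -iterSr.
exists (`|g 0%N| + C); split; first by rewrite addr_ge0.
elim=> [|N IHN]; first by rewrite add0r expr1n mulr1 lerDl.
have E : g N.+1 = g N + dif g N by rewrite /dif addrC subrK.
rewrite E; apply: le_trans (ler_normD _ _) _.
apply: le_trans (lerD IHN (HC N)) _.
have y0 : 0 <= N%:R + 1 :> R by rewrite addr_ge0.
have t0 : 0 <= (N%:R + 1) ^+ d :> R by exact: exprn_ge0.
have hh : (N%:R + 1) ^+ d.+1 + (N%:R + 1) ^+ d <= (N.+1%:R + 1) ^+ d.+1 :> R.
  rewrite -natr1 exprS [X in _ <= X]exprS.
  have : (N%:R + 1) ^+ d <= (N%:R + 1 + 1) ^+ d :> R.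
    by apply: lerXn2r => //; rewrite ?nnegrE ?addr_ge0 // ?lerDl.
  nra.
have g0 : 0 <= `|g 0%N| by [].
apply: le_trans (_ : (`|g 0%N| + C) * ((N%:R + 1) ^+ d.+1 + (N%:R + 1) ^+ d) <= _).
  rewrite mulrDr; apply: lerD => //; apply: ler_wpM2r => //; rewrite lerDr //.
by apply: ler_wpM2l => //; rewrite addr_ge0.
Qed.

Lemma gQ_to0 d g : (forall k, iter d dif g k = 0) ->
  mxcvg (fun N => g N *: Q ^+ N.+1) 0.
Proof.
move=> Hg i j; rewrite mxE; under eq_fun do rewrite mxE.
have [K [c [K0 c0 c1 Hc]]] := @geo R n Q Q0 Q1 QU.
have [C [C0 HC]] := @poly_bound d g Hg.
apply: (@decay R K c C d _ K0 c0 c1) => N.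
have /andP [h0 h1] := Hc N.+1 i j.
rewrite normrM (ger0_norm h0); apply: ler_pM => //.
apply: le_trans h1 _; apply: ler_wiXn2l => //; first exact: ltW.
by apply: leq_div2r.
Qed.

Lemma SS_lim d : forall g, (forall k, iter d dif g k = 0) ->
  mxcvg (SS g) (\sum_(0 <= j < d) iter j dif g 0%N *: (Q ^+ j *m AA ^+ j.+1)).
Proof.
elim: d => [|d IH] g Hg.
  rewrite big_geq //; apply: mxcvg_ext (mxcvg_cst 0) => N.
  by rewrite /SS big1 // => k _; have := Hg k => /= ->; rewrite scale0r.
apply: mxcvg_shift.
have Hd : forall k, iter d dif (dif g) k = 0 by move=> k; rewrite -iterSr.
apply: mxcvg_ext; first by move=> N; rewrite SS_rec.
have := mxcvg_mull AA (mxcvgB (mxcvgD (mxcvg_cst (g 0%N *: 1%:M))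
          (mxcvg_mull Q (IH _ Hd))) (@gQ_to0 d.+1 g Hg)).
congr mxcvg; rewrite subr0 mulmxDr big_nat_recl // expr0 mul1mx expr1.
rewrite -scalemxAr mulmx1; congr (_ + _).
rewrite mulmxA AAQ -mulmxA !mulmx_sumr; apply: eq_bigr => j _.
rewrite -!scalemxAr -iterSr; congr (_ *: _).
have hc : GRing.comm AA (Q ^+ j).
  by apply: commrX; rewrite /GRing.comm -!mulmxE AAQ.
rewrite !mulmxE [AA * (_ * _)]mulrA hc -[Q ^+ j * AA * _]mulrA -exprS mulrA -exprS. done.
Qed.

End Lim.
Arguments dif {R} g k.
Arguments SS {R n} Q g N.
Arguments AA {R n} Q.


Section FD.
Variable R : realType.

Lemma iter_difE d (g : nat -> R) k : iter d.+1 dif g k = iter d dif g k.+1 - iter d dif g k.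
Proof. by []. Qed.

Lemma iter_dif_sum d (I : Type) (s : seq I) (F : I -> nat -> R) k :
  iter d dif (fun k => \sum_(i <- s) F i k) k = \sum_(i <- s) iter d dif (F i) k.
Proof.
elim: d k => [|d IH] k //.
by rewrite !iter_difE !IH -sumrB; apply: eq_bigr => i _; rewrite iter_difE.
Qed.

Lemma iter_dif_scale d (a : R) (g : nat -> R) k :
  iter d dif (fun k => a * g k) k = a * iter d dif g k.
Proof. by elim: d k => [|d IH] k //; rewrite !iter_difE !IH mulrBr. Qed.

Lemma iter_dif_zero d (g : nat -> R) k : (forall k, g k = 0) -> iter d dif g k = 0.
Proof. by move=> H; elim: d k => [|d IH] k //=; rewrite /dif !IH subr0. Qed.

Lemma iter_dif_mono d e (g : nat -> R) :
  (forall k, iter d dif g k = 0) -> (d <= e)%N -> forall k, iter e dif g k = 0.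
Proof.
move=> H de k; rewrite -(subnK de) iterD; exact: iter_dif_zero.
Qed.

Lemma iter_dif_pow (x : R) m : forall k, iter m.+1 dif (fun r => (r%:R + x) ^+ m) k = 0.
Proof.
elim/ltn_ind: m => m IH k.
rewrite iterSr.
have E : dif (fun r => (r%:R + x) ^+ m) =
   (fun r => \sum_(i < m) ('C(m, i)%:R * (r%:R + x) ^+ i)).
  apply: funext => r; rewrite /dif -natr1 -addrA [1 + x]addrC addrA exprD1n.
  rewrite big_ord_recr /= binn mulr1n addrK.
  by apply: eq_bigr => i _; rewrite mulr_natl.
rewrite E iter_dif_sum big1 // => i _.
rewrite iter_dif_scale; apply/eqP; rewrite mulf_eq0; apply/orP; right; apply/eqP.
apply: (@iter_dif_mono i.+1 m); [move=> k0; exact: (IH i (ltn_ord i)) | exact: ltn_ord].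
Qed.

Lemma newton j (g : nat -> R) k :
  iter j dif g k = \sum_(0 <= r < j.+1) 'C(j, r)%:R * (-1) ^+ (j - r) * g (k + r)%N.
Proof.
elim: j k => [|j IH] k.
  by rewrite big_nat1 /= bin0 subnn expr0 !mul1r addn0.
rewrite iter_difE !IH.
rewrite [in RHS]big_nat_recl // bin0 subn0.
under [in RHS]eq_bigr do rewrite binS natrD !mulrDl subSS.
rewrite big_split /=.
rewrite [X in _ - X]big_nat_recl // bin0 subn0.
have Z : \sum_(0 <= i < j.+1) 'C(j, i.+1)%:R * (-1) ^+ (j - i) * g (k + i.+1)%N =
     - \sum_(0 <= i < j) 'C(j, i.+1)%:R * (-1) ^+ (j - i.+1) * g (k + i.+1)%N.
  rewrite big_nat_recr //= bin_small // mul0r mul0r addr0 -sumrN.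
  apply: eq_big_nat => i /andP [_ ij].
  by rewrite -(subnSK ij) exprS; ring.
rewrite Z.
have -> : \sum_(0 <= i < j.+1) 'C(j, i)%:R * (-1) ^+ (j - i) * g (k.+1 + i)%N =
  \sum_(0 <= i < j.+1) 'C(j, i)%:R * (-1) ^+ (j - i) * g (k + i.+1)%N.
  by apply: eq_bigr => i _; rewrite addSnnS.
rewrite exprS addn0 !mul1r; ring.
Qed.

End FD.


Section Prob.
Variables (R : realType) (S : finType).

Lemma sum_tupleS k (F : k.+1.-tuple S -> R) :
  \sum_(s : k.+1.-tuple S) F s = \sum_(x : S) \sum_(t : k.-tuple S) F [tuple of x :: t].
Proof.
rewrite pair_big /=.
rewrite (reindex (fun p : S * k.-tuple S => [tuple of p.1 :: p.2])) /=.
  by apply: eq_bigr => -[x t].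
exists (fun s => (thead s, [tuple of behead s])) => [[x t] _|s _].
  by congr (_, _); apply: val_inj.
by rewrite [in RHS](tuple_eta s).
Qed.

Lemma sum_tuple0 (F : 0.-tuple S -> R) : \sum_(t : 0.-tuple S) F t = F [tuple].
Proof.
rewrite (bigD1 [tuple]) //= big1 ?addr0 // => t.
by rewrite (tuple0 t); move/eqP.
Qed.

Lemma traj_cons k (i x : S) (t : k.-tuple S) r : (r <= k)%N ->
  traj i [tuple of x :: t] r.+1 = traj x t r.
Proof.
case: r => [|r] rk //=.
by apply: set_nth_default; rewrite size_tuple.
Qed.

Lemma pathw_cons (P : S -> S -> R) k (i x : S) (t : k.-tuple S) :
  pathw P i [tuple of x :: t] = P i x * pathw P x t.
Proof.
rewrite /pathw big_ord_recl /=; congr (_ * _).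
apply: eq_bigr => r _; rewrite add0n; case: r => [[|r] h] /=.
  by congr P; apply: set_nth_default; rewrite size_tuple.
by congr P; apply: set_nth_default; rewrite size_tuple // ltnW.
Qed.

Lemma cntS (A : {set S}) y r : cnt A y r.+1 = (cnt A y r + (y r.+1 \in A))%N.
Proof. by rewrite /cnt big_nat_recr. Qed.

Lemma cnt_mono (A : {set S}) y r r' : (r <= r')%N -> (cnt A y r <= cnt A y r')%N.
Proof.
move=> rr; rewrite -(subnKC rr); elim: (r' - r)%N => [|e IH]; first by rewrite addn0.
by rewrite addnS cntS; apply: leq_trans IH _; rewrite leq_addr.
Qed.

Lemma tau_isE (A : {set S}) y n :
  tau_is A y n = [&& (0 < n)%N, y n \in A & cnt A y n.-1 == 0%N].
Proof.
rewrite /tau_is; case: n => [|n] //=.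
apply/idP/idP.
  case/andP => /eqP c1 /forallP H.
  have := H (Ordinal (ltnSn n)) => /= cn.
  have : (cnt A y n <= 1)%N by rewrite -c1 cnt_mono.
  rewrite leq_eqVlt (negbTE cn) /= ltnS leqn0 => /eqP c0.
  move: c1; rewrite cntS c0 add0n; case: (y n.+1 \in A) => //= _.
case/andP => yA /eqP c0.
rewrite cntS c0 yA eqxx /=; apply/forallP => r.
have : (cnt A y r <= cnt A y n)%N by apply: cnt_mono; rewrite -ltnS.
by rewrite c0 leqn0 => /eqP ->.
Qed.

Lemma cnt_cons (A : {set S}) k (i x : S) (t : k.-tuple S) r : (r <= k)%N ->
  cnt A (traj i [tuple of x :: t]) r.+1 = ((x \in A) + cnt A (traj x t) r)%N.
Proof.
move=> rk; rewrite /cnt big_nat_recl //; congr (_ + _)%N.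
apply: eq_big_nat => u /andP [_ ur]; rewrite traj_cons //.
by apply: leq_trans rk; rewrite -ltnS.
Qed.

Fixpoint Wf (P : S -> S -> R) (A : {set S}) k (i j : S) : R :=
  if k is k'.+1 then \sum_(x | x \notin A) P i x * Wf P A k' x j
  else (j \in A)%:R * P i j.

Lemma probTau0 (P : S -> S -> R) (A : {set S}) (i j : S) : probTau P A i j 0 = 0.
Proof. by rewrite /probTau big1 // => s /andP [] /=; rewrite /tau_is. Qed.

Lemma probTauS (P : S -> S -> R) (A : {set S}) k : forall i j, probTau P A i j k.+1 = Wf P A k i j.
Proof.
elim: k => [|k IH] i j.
  rewrite /probTau big_mkcond sum_tupleS /=.
  under eq_bigr do rewrite sum_tuple0.
  rewrite (bigD1 j) //= big1 ?addr0.
    rewrite tau_isE /= /cnt big_geq //.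
    case: (j \in A) => /=; last by rewrite mul0r.
    rewrite mul1r pathw_cons /pathw big_ord0 mulr1.
    by case: (j =P j).
  move=> x xj; rewrite tau_isE /=.
  by case: (x =P j) => [xe|]; [rewrite xe eqxx in xj|rewrite andbF].
rewrite /probTau big_mkcond sum_tupleS [Wf _ _ _ _ _]/= [RHS]big_mkcond.
apply: eq_bigr => x _.
have E : forall t : k.+1.-tuple S,
    tau_is A (traj i [tuple of x :: t]) k.+2 && (traj i [tuple of x :: t] k.+2 == j)
    = (x \notin A) && (tau_is A (traj x t) k.+1 && (traj x t k.+1 == j)).
  move=> t; rewrite !tau_isE !succnK cnt_cons // !traj_cons //.
  by case: (x \in A) => //=; rewrite ?add0n ?andbF.
under eq_bigr do rewrite E.
case: (x \notin A) => /=; last by rewrite big1.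
rewrite -IH /probTau big_distrr [RHS]big_mkcond.
by apply: eq_bigr => t _; case: ifP => _; rewrite ?pathw_cons ?mulr0.
Qed.

End Prob.
Arguments Wf {R S} P A k i j.
Arguments probTau0 {R S} P A i j.
Arguments probTauS {R S} P A k i j.


Section MainS.
Variables (R : realType) (S : finType) (P : S -> S -> R).

Lemma Wf_mx (A B J : {set S}) (hB : forall x, (x \notin A) = (x \in B))
  (hJ : forall x, x \in J -> x \in A) k (i : 'I_#|B|) (j : 'I_#|J|) :
  Wf P A k (ev i) (ev j) = (blk P B B ^+ k *m blk P B J) i j.
Proof.
elim: k i => [|k IH] i.
  by rewrite expr0 mul1mx /= hJ ?mul1r ?mxE // /ev; exact: enum_valP.
rewrite /= (eq_bigl (fun x => x \in B)); last by move=> x; rewrite hB.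
rewrite exprS -mulmxE -mulmxA mxE.
under [RHS]eq_bigr do rewrite mxE -IH.
by rewrite -(big_enum_val (A := mem B) (fun x => P (ev i) x * Wf P A k x (ev j))).
Qed.

Lemma blk_nonneg (A B : {set S}) : stochastic P -> forall i j, 0 <= blk P A B i j.
Proof. by case=> H _ i j; rewrite mxE. Qed.

Lemma blk_rowsum (A B : {set S}) : stochastic P -> forall i, \sum_j blk P A B i j <= 1.
Proof.
case=> H0 H1 i; rewrite -(H1 (ev i)).
under eq_bigr do rewrite mxE.
rewrite -(big_enum_val (A := mem B) (fun x => P (ev i) x)).
rewrite [X in _ <= X]big_mkcond /= [X in X <= _]big_mkcond /=.
by apply: ler_sum => x _; case: ifP.
Qed.

End MainS.

Lemma bst_newton (R : realType) (x : R) m j :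
  bst m j x = iter j dif (fun r : nat => (r%:R + x) ^+ m) 0%N.
Proof.
rewrite newton /bst big_mkord; apply: eq_bigr => r _; by rewrite add0n.
Qed.

Theorem mainTheorem1 (R : realType) (S : finType) (P : S -> S -> R)
    (M : {set S}) :
  stochastic P ->
  M != finset.set0 -> ~: M != finset.set0 ->
  (1%:M - blk P M M) \in unitmx ->
  (1%:M - blk P (~: M) (~: M)) \in unitmx ->
  forall m : nat,
    moment_is (probN1 P M) m
      (\sum_(j < m.+1) bst m j 1 *:
         (blk P M M ^+ j *m invmx (1%:M - blk P M M) ^+ j.+1 *m blk P M (~: M)))
  /\
    moment_is (probR1 P M) m
      (blk P M M + blk P M (~: M) *m
         (\sum_(j < m.+1) bst m j 2 *:
            (blk P (~: M) (~: M) ^+ j *m invmx (1%:M - blk P (~: M) (~: M)) ^+ j.+1)) *m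
         blk P (~: M) M).
Proof.
move=> Hst _ _ U1 U2 m; split.
- set Q := blk P M M; set Pmn := blk P M (~: M).
  pose g := fun r : nat => (r%:R + 1 : R) ^+ m.
  have Hg : forall k, iter m.+1 dif g k = 0 := @iter_dif_pow R 1 m.
  have HL := mxcvg_mulr Pmn (@SS_lim R _ Q (@blk_nonneg R S P M M Hst) (@blk_rowsum R S P M M Hst) U1 m.+1 g Hg).
  have EL : \sum_(j < m.+1) bst m j 1 *: (Q ^+ j *m invmx (1%:M - Q) ^+ j.+1 *m Pmn) =
     (\sum_(0 <= j < m.+1) iter j dif g 0%N *: (Q ^+ j *m AA Q ^+ j.+1)) *m Pmn.
    rewrite mulmx_suml big_mkord; apply: eq_bigr => j _.
    by rewrite -scalemxAl bst_newton.
  rewrite /moment_is EL => i j; rewrite -cvg_shiftS.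
  have E : forall N, \sum_(n < N.+1) n%:R ^+ m * probN1 P M n i j = (SS Q g N *m Pmn) i j.
    move=> N; rewrite -(big_mkord xpredT (fun n => n%:R ^+ m * probN1 P M n i j)).
    rewrite big_nat_recl // /probN1 mxE probTau0 mulr0 add0r.
    rewrite /SS mulmx_suml summxE; apply: eq_bigr => k _.
    rewrite mxE probTauS (@Wf_mx R S P (~: M) M (~: M)) //; last first.
      by move=> x; rewrite !inE negbK.
    by rewrite -scalemxAl !mxE /g natr1.
  under eq_fun do rewrite E.
  exact: HL i j.
- set Q := blk P M M; set Pmn := blk P M (~: M).
  set Pb := blk P (~: M) (~: M); set Pnm := blk P (~: M) M.
  pose g := fun r : nat => (r%:R + 2 : R) ^+ m.
  have Hg : forall k, iter m.+1 dif g k = 0 := @iter_dif_pow R 2 m.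
  have HL := mxcvg_mulr Pnm (mxcvg_mull Pmn
     (@SS_lim R _ Pb (@blk_nonneg R S P _ _ Hst) (@blk_rowsum R S P _ _ Hst) U2 m.+1 g Hg)).
  have EL : \sum_(j < m.+1) bst m j 2 *: (Pb ^+ j *m invmx (1%:M - Pb) ^+ j.+1) =
     \sum_(0 <= j < m.+1) iter j dif g 0%N *: (Pb ^+ j *m AA Pb ^+ j.+1).
    rewrite big_mkord; apply: eq_bigr => j _.
    by rewrite bst_newton.
  rewrite /moment_is EL => i j; rewrite -cvg_shiftS -cvg_shiftS.
  have E : forall N, \sum_(n < N.+2) n%:R ^+ m * probR1 P M n i j =
      Q i j + (Pmn *m SS Pb g N *m Pnm) i j.
    move=> N; rewrite -(big_mkord xpredT (fun n => n%:R ^+ m * probR1 P M n i j)).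
    rewrite big_nat_recl // big_nat_recl // /probR1 mxE probTau0 mulr0 add0r.
    rewrite mxE probTauS /= (_ : ev j \in M); last by rewrite /ev; exact: enum_valP.
    rewrite mulr1n expr1n !mul1r /Q mxE; congr (_ + _).
    rewrite /SS mulmx_sumr mulmx_suml summxE; apply: eq_bigr => k _.
    rewrite mxE probTauS -scalemxAr -scalemxAl mxE /g -mulmxA.
    have -> : (k.+2)%:R = k%:R + 2 :> R by rewrite -addn2 natrD.
    congr (_ * _); rewrite /= (eq_bigl (fun x => x \in ~: M)); last first.
      by move=> x; rewrite !inE.
    rewrite mxE.
    have W : forall l, (Pb ^+ k *m Pnm) l j = Wf P M k (ev l) (ev j).
      move=> l; rewrite (@Wf_mx R S P M (~: M) M) // => x; rewrite !inE //.
    under [RHS]eq_bigr do rewrite W /Pmn mxE.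
    by rewrite -(big_enum_val (A := mem (~: M)) (fun x => P (ev i) x * Wf P M k x (ev j))).
  under eq_fun do rewrite /= E.
  rewrite mxE; apply: cvgD; [exact: cvg_cst | exact: HL i j].
Qed.
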